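(* Let $X$ be a countable two-dimensional subshift of finite type whose subpattern poset $(X/\!\approx, \succcurlyeq)$ has at least two elements. Then $X$ contains two doubly periodic points $x, y$ (i.e. each invariant under some shift by $(r,0)$ and by $(0,r)$ with $r>0$) with $x \not\approx y$.
   Context: A two-dimensional SFT is the set of configurations in $S^{\mathbb{Z}^2}$ ($S$ finite) avoiding a finite set of forbidden finite patterns. For configurations $x,y$, $x \succcurlyeq y$ means every finite pattern occurring in $y$ also occurs in $x$; $x \approx y$ means $x \succcurlyeq y$ and $y \succcurlyeq x$. The subpattern poset of $X$ is $(X/\!\approx, \succcurlyeq)$. *)

(* Defs.v *)
From mathcomp Require Import all_boot.
From Stdlib Require Import ZArith List.
Set Implicit Arguments.
Unset Strict Implicit.
Unset Printing Implicit Defensive.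

Definition cell := (Z * Z)%type.
Definition cadd (u v : cell) : cell := ((u.1 + v.1)%Z, (u.2 + v.2)%Z).

Definition config (S : finType) := cell -> S.

Definition pattern (S : finType) := list (cell * S).

Definition occurs (S : finType) (p : pattern S) (x : config S) : Prop :=
  exists v : cell, forall c a, List.In (c, a) p -> x (cadd c v) = a.

Definition is_SFT (S : finType) (X : config S -> Prop) : Prop :=
  exists F : list (pattern S),
    forall x : config S, X x <-> (forall p, List.In p F -> ~ occurs p x).

Definition countable_set (S : finType) (X : config S -> Prop) : Prop :=
  exists g : config S -> nat,
    forall x y, X x -> X y -> g x = g y -> x = y.

Definition subpat_ge (S : finType) (x y : config S) : Prop :=
  forall p : pattern S, occurs p y -> occurs p x.

Definition subpat_equiv (S : finType) (x y : config S) : Prop :=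
  subpat_ge x y /\ subpat_ge y x.

Definition doubly_periodic (S : finType) (x : config S) : Prop :=
  exists r : Z, (0 < r)%Z /\
    forall c : cell, x (cadd c (r, 0%Z)) = x c /\ x (cadd c (0%Z, r)) = x c.

(* Main.v *)
Require Import Defs.
From mathcomp Require Import all_boot zify.
From Stdlib Require Import ZArith List Lia.
From Stdlib Require Import Classical ClassicalEpsilon FunctionalExtensionality.
Set Implicit Arguments.
Unset Strict Implicit.
Unset Printing Implicit Defensive.

Section Basics.
Variable S : finType.
Implicit Types x y z p : config S.
Local Open Scope Z_scope.

Definition shft (v : cell) x : config S := fun c => x (cadd c v).
Definition agree (N : Z) x y := forall d : cell, Z.abs d.1 <= N -> Z.abs d.2 <= N -> x d = y d.
Definition period x (v : cell) := forall c, x (cadd c v) = x c.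

Lemma xeq x (a b : cell) : a.1 = b.1 -> a.2 = b.2 -> x a = x b.
Proof. by case: a => a1 a2; case: b => b1 b2 /= -> ->. Qed.

Lemma cell_ext' (a b : cell) : a.1 = b.1 -> a.2 = b.2 -> a = b.
Proof. by case: a => ? ?; case: b => ? ? /= -> ->. Qed.

Ltac ceq1 := apply: xeq; cbn [cadd fst snd]; lia.

Lemma period_opp x v : period x v -> period x (- v.1, - v.2).
Proof.
move=> H c. rewrite -(H (cadd c (- v.1, - v.2))). ceq1.
Qed.

Lemma period_add x v w : period x v -> period x w -> period x (v.1 + w.1, v.2 + w.2).
Proof.
move=> Hv Hw c. rewrite -(Hv c) -(Hw (cadd c v)). ceq1.
Qed.

Lemma period_0 x : period x (0,0).
Proof. move=> c; ceq1. Qed.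

Lemma period_nat x v (n : nat) : period x v -> period x (Z.of_nat n * v.1, Z.of_nat n * v.2).
Proof.
move=> Hv; elim: n => [|n IH].
  move=> c; ceq1.
move=> c. rewrite -(period_add IH Hv c). ceq1.
Qed.

Lemma period_mul x v (n : Z) : period x v -> period x (n * v.1, n * v.2).
Proof.
move=> Hv. case: (Z_le_gt_dec 0 n) => Hn.
  have := period_nat (Z.to_nat n) Hv. rewrite Z2Nat.id //.
have := period_opp (period_nat (Z.to_nat (- n)) Hv). rewrite Z2Nat.id; last lia.
move=> H c; rewrite -(H c); ceq1.
Qed.

Lemma period_lin x v w (a b : Z) : period x v -> period x w ->
  period x (a * v.1 + b * w.1, a * v.2 + b * w.2).
Proof.
move=> Hv Hw. have := period_add (period_mul a Hv) (period_mul b Hw). by [].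
Qed.

Lemma period_ext x v w : period x v -> v.1 = w.1 -> v.2 = w.2 -> period x w.
Proof. move=> H e1 e2 c; rewrite -(H c); ceq1. Qed.

Lemma dp_of_periods x h t : period x h -> period x t ->
  h.2 * t.1 - h.1 * t.2 <> 0 -> doubly_periodic x.
Proof.
move=> Hh Ht HD. set D := h.2 * t.1 - h.1 * t.2.
have P1 : period x (D, 0).
  apply: (period_ext (period_lin (- t.2) (h.2) Hh Ht)); cbn [fst snd]; rewrite /D; lia.
have P2 : period x (0, D).
  apply: (period_ext (period_lin (t.1) (- h.1) Hh Ht)); cbn [fst snd]; rewrite /D; lia.
exists (Z.abs D); split; first lia.
move=> c; case: (Z_le_gt_dec 0 D) => HD0.
  rewrite Z.abs_eq; last lia. split; [apply P1| apply P2].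
rewrite Z.abs_neq; last lia.
split; [apply: (period_ext (period_opp P1)) | apply: (period_ext (period_opp P2))]; cbn [fst snd]; lia.
Qed.

End Basics.

Ltac ceq2 := apply: xeq; cbn [cadd fst snd]; lia.

Section Region.
Variable S : finType.
Implicit Types x y z : config S.
Local Open Scope Z_scope.
Variables (p : config S) (r R : Z).
Hypotheses (hr : 0 < r) (hR : r <= R) (pr1 : period p (r,0)) (pr2 : period p (0,r)).

Lemma cell_ext (a b : cell) : a.1 = b.1 -> a.2 = b.2 -> a = b.
Proof. by case: a => ? ?; case: b => ? ? /= -> ->. Qed.
Ltac cext := apply: cell_ext; cbn [cadd fst snd]; lia.

Definition csub (c u : cell) : cell := (c.1 - u.1, c.2 - u.2).
Definition Ph z c u := forall d : cell, Z.abs d.1 <= R -> Z.abs d.2 <= R ->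
  z (cadd c d) = p (csub (cadd c d) u).
Definition pgood z c := exists u, Ph z c u.
Definition Eq u u' := forall w : cell, p (csub w u) = p (csub w u').

Lemma p_per (a b : Z) c : p (c.1 + a * r, c.2 + b * r) = p c.
Proof.
have := period_lin a b pr1 pr2 c. move=> <-. ceq2.
Qed.

Lemma agree_sq u u' (a : cell) :
  (forall x : cell, a.1 <= x.1 < a.1 + r -> a.2 <= x.2 < a.2 + r ->
     p (csub x u) = p (csub x u')) -> Eq u u'.
Proof.
move=> H x.
set q1 := (x.1 - a.1) / r. set q2 := (x.2 - a.2) / r.
have E1 := Z.div_mod (x.1 - a.1) r ltac:(lia).
have E2 := Z.div_mod (x.2 - a.2) r ltac:(lia).
have B1 := Z.mod_pos_bound (x.1 - a.1) r hr.
have B2 := Z.mod_pos_bound (x.2 - a.2) r hr.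
set x' : cell := (x.1 - q1 * r, x.2 - q2 * r).
have Hx' := H x'.
have e : forall w, p (csub x w) = p (csub x' w).
  move=> w. rewrite -(p_per q1 q2 (csub x' w)). apply: xeq; rewrite /x' /csub /=; lia.
rewrite !e; apply: Hx'; rewrite /x' /=; rewrite -/q1 -/q2 in E1 E2; lia.
Qed.

Lemma Eq_sym u u' : Eq u u' -> Eq u' u.
Proof. by move=> H x; rewrite H. Qed.
Lemma Eq_trans u u' u'' : Eq u u' -> Eq u' u'' -> Eq u u''.
Proof. by move=> H H' x; rewrite H H'. Qed.

Lemma Ph_Eq z c u u' : Ph z c u -> Eq u u' -> Ph z c u'.
Proof. by move=> H E d h1 h2; rewrite H // E. Qed.

Lemma Ph_step z c s u u' : Ph z c u -> Ph z (cadd c s) u' ->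
  Z.abs s.1 <= 1 -> Z.abs s.2 <= 1 -> Eq u u'.
Proof.
move=> H H' hs1 hs2.
apply: (agree_sq (a := (c.1 - R + 1, c.2 - R + 1))) => x /= hx1 hx2.
have e1 := H (x.1 - c.1, x.2 - c.2) ltac:(cbn; lia) ltac:(cbn; lia).
have e2 := H' (x.1 - c.1 - s.1, x.2 - c.2 - s.2) ltac:(cbn; lia) ltac:(cbn; lia).
have ex : forall d : cell, x = d -> p (csub x u) = p (csub d u) by move=> ? ->.
have c1 : cadd c (x.1 - c.1, x.2 - c.2) = x by cext.
have c2 : cadd (cadd c s) (x.1 - c.1 - s.1, x.2 - c.2 - s.2) = x by cext.
rewrite c1 in e1; rewrite c2 in e2. by rewrite -e1 -e2.
Qed.

Lemma Ph_pt z c u : Ph z c u -> z c = p (csub c u).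
Proof.
move=> H. have := H (0,0) ltac:(cbn; lia) ltac:(cbn; lia).
have -> : cadd c (0,0) = c by cext.
done.
Qed.

Section Reg.
Variable z : config S.
Variable Reg : cell -> Prop.
Variables e1 e2 : Z.
Hypotheses (he1 : Z.abs e1 = 1) (he2 : Z.abs e2 = 1).
Hypothesis Hc1 : forall c, Reg c -> Reg (cadd c (e1, 0)).
Hypothesis Hc2 : forall c, Reg c -> Reg (cadd c (0, e2)).
Hypothesis Hg : forall c, Reg c -> pgood z c.

Lemma transport1 (n : nat) c u : Reg c -> Ph z c u ->
  Reg (cadd c (Z.of_nat n * e1, 0)) /\ Ph z (cadd c (Z.of_nat n * e1, 0)) u.
Proof.
elim: n c => [|n IH] c hc hp.
  have -> : cadd c (Z.of_nat 0 * e1, 0) = c by cext.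
  by [].
have [h1 h2] := IH c hc hp.
set c' := cadd c (Z.of_nat n * e1, 0) in h1 h2.
have -> : cadd c (Z.of_nat n.+1 * e1, 0) = cadd c' (e1, 0).
  rewrite /c'; cext.
have hr' := Hc1 h1. split=> //.
have [u' hu'] := Hg hr'.
apply: (Ph_Eq hu'). apply: Eq_sym. apply: (Ph_step h2 hu'); cbn; lia.
Qed.

Lemma transport2 (n : nat) c u : Reg c -> Ph z c u ->
  Reg (cadd c (0, Z.of_nat n * e2)) /\ Ph z (cadd c (0, Z.of_nat n * e2)) u.
Proof.
elim: n c => [|n IH] c hc hp.
  have -> : cadd c (0, Z.of_nat 0 * e2) = c by cext.
  by [].
have [h1 h2] := IH c hc hp.
set c' := cadd c (0, Z.of_nat n * e2) in h1 h2.
have -> : cadd c (0, Z.of_nat n.+1 * e2) = cadd c' (0, e2).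
  rewrite /c'; cext.
have hr' := Hc2 h1. split=> //.
have [u' hu'] := Hg hr'.
apply: (Ph_Eq hu'). apply: Eq_sym. apply: (Ph_step h2 hu'); cbn; lia.
Qed.

Lemma transport (a b : nat) c u : Reg c -> Ph z c u ->
  Ph z (c.1 + Z.of_nat a * e1, c.2 + Z.of_nat b * e2) u.
Proof.
move=> hc hp. have [h1 h2] := transport1 a hc hp.
have [_ h4] := transport2 b h1 h2.
move: h4. have -> : cadd (cadd c (Z.of_nat a * e1, 0)) (0, Z.of_nat b * e2) =
   (c.1 + Z.of_nat a * e1, c.2 + Z.of_nat b * e2).
  cext.
done.
Qed.

Lemma common1 (e a a' : Z) : Z.abs e = 1 ->
  exists n n' : nat, a + Z.of_nat n * e = a' + Z.of_nat n' * e.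
Proof.
move=> he. case: (Z_le_gt_dec 0 (e * (a' - a))) => h.
  exists (Z.to_nat (e * (a' - a))), 0%nat. rewrite Z2Nat.id //.
  have : e * e = 1 by lia. nia.
exists 0%nat, (Z.to_nat (e * (a - a'))). rewrite Z2Nat.id; last lia.
have : e * e = 1 by lia. nia.
Qed.

Lemma region_phase c0 u : Reg c0 -> Ph z c0 u -> forall c, Reg c -> z c = p (csub c u).
Proof.
move=> h0 hp c hc.
have [u' hu'] := Hg hc.
have [n1 [n1' E1]] := common1 c0.1 c.1 he1.
have [n2 [n2' E2]] := common1 c0.2 c.2 he2.
have T1 := transport n1 n2 h0 hp.
have T2 := transport n1' n2' hc hu'.
rewrite E1 E2 in T1.
have E : Eq u' u.
  apply: (Ph_step T2 (s := (0,0))).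
  - move: T1; by have -> : cadd (c.1 + Z.of_nat n1' * e1, c.2 + Z.of_nat n2' * e2) (0,0) = (c.1 + Z.of_nat n1' * e1, c.2 + Z.of_nat n2' * e2) by cext.
  - cbn; lia.
  - cbn; lia.
by rewrite (Ph_pt hu') E.
Qed.

End Reg.
End Region.

Ltac ceq3 := apply: xeq; cbn [cadd fst snd]; lia.
Local Open Scope Z_scope.

Lemma absb (a b c1 c2 K : Z) : Z.abs c1 <= K -> Z.abs c2 <= K ->
  Z.abs (a * c1 + b * c2) <= (Z.abs a + Z.abs b) * K.
Proof.
move=> h1 h2.
have t := Z.abs_triangle (a * c1) (b * c2).
rewrite !Z.abs_mul in t.
have : Z.abs a * Z.abs c1 <= Z.abs a * K by apply: Z.mul_le_mono_nonneg_l; lia.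
have : Z.abs b * Z.abs c2 <= Z.abs b * K by apply: Z.mul_le_mono_nonneg_l; lia.
lia.
Qed.

Section Glue.
Variable S : finType.
Implicit Types x y z : config S.
Variable X : config S -> Prop.
Variable F : list (pattern S).
Variable K : Z.
Hypothesis HX : forall x, X x <-> (forall q, List.In q F -> ~ occurs q x).
Hypothesis HK : forall q c a, List.In q F -> List.In (c, a) q -> Z.abs c.1 <= K /\ Z.abs c.2 <= K.

Variables (z : config S) (al be : Z) (t : cell) (T m : Z).
Definition lf (c : cell) := al * c.1 + be * c.2.
Definition kk (c : cell) := (lf c - m) / T.
Definition glue : config S := fun c => z (c.1 - kk c * t.1, c.2 - kk c * t.2).
Let D := (Z.abs al + Z.abs be) * K.

Hypothesis hT : 0 < T.
Hypothesis hK0 : 0 <= K.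
Hypothesis hft : al * t.1 + be * t.2 = T.
Hypothesis hTD : 2 * D < T.
Hypothesis hz : forall d, m - 2 * D <= lf d < m -> z (cadd d t) = z d.

Lemma kk_bounds c : kk c * T <= lf c - m < kk c * T + T.
Proof.
have E := Z.div_mod (lf c - m) T ltac:(lia).
have B := Z.mod_pos_bound (lf c - m) T hT. rewrite /kk. lia.
Qed.

Lemma lf_sub c k : lf (c.1 - k * t.1, c.2 - k * t.2) = lf c - k * T.
Proof. rewrite /lf /= -hft. ring. Qed.

Lemma glue_claim v : exists k, forall e : cell, Z.abs (lf e - lf v) <= D ->
  glue e = z (e.1 - k * t.1, e.2 - k * t.2).
Proof.
set s := lf v - m. set k0 := s / T. set rho := s mod T.
have E := Z.div_mod s T ltac:(lia).
have B := Z.mod_pos_bound s T hT.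
rewrite -/k0 -/rho in E.
have D0 : 0 <= D by rewrite /D; apply: Z.mul_nonneg_nonneg; [have := Z.abs_nonneg al; have := Z.abs_nonneg be; lia | lia].
case: (Z_lt_le_dec (rho + D) T) => hc.
- exists k0 => e he. have [b1 b2] := kk_bounds e.
  have hk : kk e = k0 \/ kk e = k0 - 1.
    have h1 : (kk e - k0) * T < 1 * T by lia.
    have h2 : (-1) * T < (kk e - k0 + 1) * T by lia.
    apply Z.mul_lt_mono_pos_r in h1; last lia.
    apply Z.mul_lt_mono_pos_r in h2; last lia.
    lia.
  rewrite /glue. case: hk => hk; rewrite hk; first by [].
  rewrite hk in b1 b2.
  set d : cell := (e.1 - k0 * t.1, e.2 - k0 * t.2).
  have hd : m - 2 * D <= lf d < m by rewrite /d lf_sub; lia.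
  rewrite -(hz hd) /d. ceq3.
- exists (k0 + 1) => e he. have [b1 b2] := kk_bounds e.
  have hk : kk e = k0 \/ kk e = k0 + 1.
    have h1 : (kk e - k0) * T < 2 * T by lia.
    have h2 : (-1) * T < (kk e - k0) * T by lia.
    apply Z.mul_lt_mono_pos_r in h1; last lia.
    apply Z.mul_lt_mono_pos_r in h2; last lia.
    lia.
  rewrite /glue. case: hk => hk; rewrite hk; last by [].
  rewrite hk in b1 b2.
  set d : cell := (e.1 - (k0 + 1) * t.1, e.2 - (k0 + 1) * t.2).
  have hd : m - 2 * D <= lf d < m by rewrite /d lf_sub; lia.
  rewrite -(hz hd) /d. ceq3.
Qed.

Lemma glue_X : X z -> X glue.
Proof.
move=> Xz. apply/HX => q hq [v hv].
have [k hk] := glue_claim v.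
move/HX: Xz => Xz. apply: (Xz q hq).
exists (v.1 - k * t.1, v.2 - k * t.2) => c a hca.
rewrite -(hv c a hca) hk.
  ceq3.
have [h1 h2] := HK hq hca.
have := absb (a:=al) (b:=be) h1 h2. rewrite /lf /=. rewrite /D. nia.
Qed.

Lemma glue_per : period glue t.
Proof.
move=> c. rewrite /glue.
have -> : kk (cadd c t) = kk c + 1.
  rewrite /kk. have -> : lf (cadd c t) - m = (lf c - m) + 1 * T by rewrite /lf; cbn [cadd fst snd]; lia.
  by rewrite Z.div_add; lia.
ceq3.
Qed.

Lemma glue_per2 h : lf h = 0 -> period z h -> period glue h.
Proof.
move=> hh hz' c. rewrite /glue.
have -> : kk (cadd c h) = kk c.
  rewrite /kk. have -> : lf (cadd c h) = lf c by move: hh; rewrite /lf; cbn [cadd fst snd]; lia.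
  by [].
rewrite -(hz' (c.1 - kk c * t.1, c.2 - kk c * t.2)). ceq3.
Qed.

Lemma glue_eq c : 0 <= lf c - m < T -> glue c = z c.
Proof.
move=> h. rewrite /glue /kk Z.div_small //. ceq3.
Qed.

End Glue.

Local Open Scope Z_scope.

Definition inf (P : nat -> Prop) := forall k0, exists k, (k0 <= k)%nat /\ P k.

Lemma pigeon (T : finType) (P : nat -> Prop) (f : nat -> T) :
  inf P -> exists t, inf (fun k => P k /\ f k = t).
Proof.
move=> HP. apply: NNPP => Hn.
have H : forall t, exists b, forall k, (b <= k)%nat -> ~ (P k /\ f k = t).
  move=> t. apply: NNPP => Hb. apply: Hn. exists t => k0.
  apply: NNPP => Hk. apply: Hb. exists k0 => k hk hpk. apply: Hk. by exists k.
have H2 : forall l : list T, exists b, forall t, t \in l -> forall k, (b <= k)%nat -> ~ (P k /\ f k = t).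
  elim=> [|t l [b Hb]]; first by exists 0%nat.
  have [b' Hb'] := H t. exists (maxn b b') => t'. rewrite seq.in_cons => /orP [/eqP ->|ht] k hk.
    apply: Hb'. lia.
  apply: Hb => //. lia.
have [b Hb] := H2 (enum T).
have [k [hk hpk]] := HP b.
by apply: (Hb (f k) (mem_enum _ _) k hk).
Qed.

Section Acc.
Variable S : finType.
Implicit Types x y z w : config S.

Definition o2c (n : nat) (i : 'I_(n.*2.+1) * 'I_(n.*2.+1)) : cell :=
  (Z.of_nat i.1 - Z.of_nat n, Z.of_nat i.2 - Z.of_nat n).
Definition wt (n : nat) := {ffun 'I_(n.*2.+1) * 'I_(n.*2.+1) -> S}.
Definition win (n : nat) x : wt n := [ffun i => x (o2c i)].

Lemma agree_win n x y : win n x = win n y <-> agree (Z.of_nat n) x y.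
Proof.
split.
- move=> H d h1 h2.
  pose i : 'I_(n.*2.+1) * 'I_(n.*2.+1) := (inord (Z.to_nat (d.1 + Z.of_nat n)), inord (Z.to_nat (d.2 + Z.of_nat n))).
  have E : o2c i = d.
    rewrite /o2c /i /= !inordK; try lia.
    case: d h1 h2 {i} => d1 d2 /= h1 h2. f_equal; lia.
  have := congr1 (fun f : wt n => f i) H. by rewrite !ffunE E.
- move=> H. apply/ffunP => i. rewrite !ffunE. apply: H; rewrite /o2c /=.
  + have := ltn_ord i.1. move: (nat_of_ord i.1) => k. lia.
  + have := ltn_ord i.2. move: (nat_of_ord i.2) => k. lia.
Qed.

Lemma agree_refl N x : agree N x x.
Proof. by []. Qed.
Lemma agree_sym N x y : agree N x y -> agree N y x.
Proof. by move=> H d h1 h2; rewrite H. Qed.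
Lemma agree_trans N x y z : agree N x y -> agree N y z -> agree N x z.
Proof. by move=> H H' d h1 h2; rewrite H // H'. Qed.
Lemma agree_mono N M x y : N <= M -> agree M x y -> agree N x y.
Proof. move=> h H d h1 h2; apply: H; lia. Qed.

Lemma agree_shft N u x y : agree (N + Z.abs u.1 + Z.abs u.2) x y -> agree N (shft u x) (shft u y).
Proof. move=> H d h1 h2. rewrite /shft. apply: H; cbn [cadd fst snd]; lia. Qed.

Lemma shft_shft u v x : shft u (shft v x) = shft (cadd u v) x.
Proof. apply: functional_extensionality => c. rewrite /shft. apply: xeq; cbn [cadd fst snd]; lia. Qed.

Lemma shft0 x : shft (0,0) x = x.
Proof. apply: functional_extensionality => c. rewrite /shft. apply: xeq; cbn [cadd fst snd]; lia. Qed.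

Definition nm (c : cell) : nat := Z.to_nat (Z.max (Z.abs c.1) (Z.abs c.2)).

Section AccSeq.
Variable xs : nat -> config S.

Definition stp (n : nat) (P : nat -> Prop) : nat -> Prop :=
  let t := epsilon (inhabits (win n (xs 0))) (fun t => inf (fun k => P k /\ win n (xs k) = t)) in
  fun k => P k /\ win n (xs k) = t.

Fixpoint lev (n : nat) : nat -> Prop :=
  match n with
  | O => stp 0 (fun _ => True)
  | n'.+1 => stp n'.+1 (lev n')
  end.

Lemma stp_inf n P : inf P -> inf (stp n P).
Proof.
move=> HP. rewrite /stp. apply: (epsilon_spec (inhabits (win n (xs 0))) (fun t => inf (fun k => P k /\ win n (xs k) = t))).
exact: pigeon.
Qed.

Lemma lev_inf n : inf (lev n).
Proof.
elim: n => [|n IH] /=; apply: stp_inf => //.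
move=> k0; by exists k0.
Qed.

Lemma lev_agree n k j : lev n k -> lev n j -> agree (Z.of_nat n) (xs k) (xs j).
Proof.
move=> hk hj; apply/agree_win; case: n hk hj => [|n] [_ ->] [_ ->] //.
Qed.

Lemma lev_mono n m k : (m <= n)%nat -> lev n k -> lev m k.
Proof.
elim: n m => [|n IH] m hm hk.
  by have -> : m = 0%nat by lia.
have [->|hlt] : m = n.+1 \/ (m <= n)%nat by lia. done.
apply: IH => //. by case: hk.
Qed.

Definition rep n := epsilon (inhabits 0%nat) (lev n).

Lemma rep_lev n : lev n (rep n).
Proof.
rewrite /rep. apply: (epsilon_spec (inhabits 0%nat) (lev n)).
have [k [_ hk]] := lev_inf n 0%nat. by exists k.
Qed.

Definition alim : config S := fun c => xs (rep (nm c)) c.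

Lemma alim_spec (N : nat) k0 : exists k, (k0 <= k)%nat /\ agree (Z.of_nat N) (xs k) alim.
Proof.
have [k [hk hl]] := lev_inf N k0. exists k; split=> // d h1 h2.
rewrite /alim. have hn : (nm d <= N)%nat by rewrite /nm; lia.
have := lev_agree (lev_mono hn hl) (rep_lev (nm d)). move=> H.
apply: H; rewrite /nm; lia.
Qed.

End AccSeq.

Lemma accum (xs : nat -> config S) : exists w, forall (N : nat) k0, exists k, (k0 <= k)%nat /\ agree (Z.of_nat N) (xs k) w.
Proof. exists (alim xs). exact: alim_spec. Qed.

End Acc.

Local Open Scope Z_scope.

Definition pb (P : Prop) : bool := if excluded_middle_informative P then true else false.
Lemma pbE P : pb P = true <-> P.
Proof. rewrite /pb; case: excluded_middle_informative => //. Qed.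

Lemma min_exists (Q : nat -> Prop) : (exists n, Q n) -> exists n, Q n /\ forall m, Q m -> (n <= m)%nat.
Proof.
move=> [n0 hn0]. apply: NNPP => H.
have K : forall n m, (m <= n)%nat -> ~ Q m.
  elim=> [|n IH] m hm hq.
    apply: H. exists m; split=> // m' _. lia.
  have [hle|e] : (m <= n)%nat \/ m = n.+1 by lia.
    exact: (IH m hle hq).
  subst m. apply: H. exists n.+1; split=> // m' hm'.
  apply: NNPP => hlt. apply: (IH m') => //. lia.
exact: (K n0 n0 (leqnn _) hn0).
Qed.

Definition alimit (S : finType) (xs : nat -> config S) (w : config S) :=
  forall (N : nat) k0, exists k, (k0 <= k)%nat /\ agree (Z.of_nat N) (xs k) w.

Section GM.
Variable S : finType.
Implicit Types x y z w : config S.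
Variable X : config S -> Prop.
Hypothesis Xshft : forall x v, X x -> X (shft v x).
Hypothesis Xclosed : forall w, (forall N : nat, exists y, X y /\ agree (Z.of_nat N) y w) -> X w.
Variable g : config S -> nat.
Hypothesis ginj : forall x y, X x -> X y -> g x = g y -> x = y.
Variable def : config S -> Prop.
Variable Rd : nat.
Hypothesis def_loc : forall x y, agree (Z.of_nat Rd) x y -> def x -> def y.
Variable x0 : config S.
Hypothesis hx0 : X x0.
Hypothesis dx0 : def x0.

Definition Lset (n : nat) y : {set wt S n} := [set t | pb (exists v, win n (shft v y) = t)].

Lemma in_Lset n y t : t \in Lset n y <-> exists v, win n (shft v y) = t.
Proof. rewrite inE; exact: pbE. Qed.

Lemma Lset_shft n u y : Lset n (shft u y) = Lset n y.
Proof.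
apply/setP => t. apply/idP/idP.
- move/in_Lset => [v hv]. apply/in_Lset. exists (cadd v u). by rewrite -shft_shft.
- move/in_Lset => [v hv]. apply/in_Lset. exists (v.1 - u.1, v.2 - u.2).
  rewrite shft_shft -hv. congr (win n (shft _ y)). apply: cell_ext'; cbn [cadd fst snd]; lia.
Qed.

Lemma lim_X xs w : alimit xs w -> (forall k, X (xs k)) -> X w.
Proof. move=> hl hx. apply: Xclosed => N. have [k [_ hk]] := hl N 0%nat. by exists (xs k). Qed.

Lemma lim_def xs w : alimit xs w -> (forall k, def (xs k)) -> def w.
Proof. move=> hl hx. have [k [_ hk]] := hl Rd 0%nat. exact: def_loc hk (hx k). Qed.

Lemma lim_Lset xs w n t : alimit xs w -> t \in Lset n w -> forall k0, exists k, (k0 <= k)%nat /\ t \in Lset n (xs k).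
Proof.
move=> hl /in_Lset [v hv] k0.
have [k [hk ha]] := hl (Z.to_nat (Z.of_nat n + Z.abs v.1 + Z.abs v.2)) k0.
exists k; split=> //. apply/in_Lset. exists v. rewrite -hv. apply/agree_win.
apply: agree_shft. apply: agree_mono ha. lia.
Qed.

Definition C0 y := X y /\ exists v, def (shft v y).
Definition mincard n (P : config S -> Prop) : {set wt S n} :=
  epsilon (inhabits set0) (fun L => (exists y, P y /\ Lset n y = L) /\ forall y, P y -> (#|L| <= #|Lset n y|)%nat).

Lemma mincard_spec n P : (exists y, P y) ->
  (exists y, P y /\ Lset n y = mincard n P) /\ forall y, P y -> (#|mincard n P| <= #|Lset n y|)%nat.
Proof.
move=> hP. rewrite /mincard. apply: (epsilon_spec (inhabits set0) (fun L => (exists y, P y /\ Lset n y = L) /\ forall y, P y -> (#|L| <= #|Lset n y|)%nat)).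
have [y1 hy1] := hP.
have [m [[y0 [hy0 hc0]] hm]] := min_exists (Q := fun k => exists y, P y /\ #|Lset n y| = k) (ex_intro _ _ (ex_intro _ y1 (conj hy1 erefl))).
exists (Lset n y0). split; first by exists y0.
move=> y hy. rewrite hc0. apply: hm. by exists y.
Qed.

Fixpoint C (n : nat) : config S -> Prop :=
  match n with
  | O => C0
  | n'.+1 => fun y => C n' y /\ Lset n' y = mincard n' (C n')
  end.

Lemma C_shft n y u : C n y -> C n (shft u y).
Proof.
elim: n y => [|n IH] y /=.
- move=> [hX [v hv]]. split; first exact: Xshft.
  exists (v.1 - u.1, v.2 - u.2). rewrite shft_shft.
  have -> : cadd (v.1 - u.1, v.2 - u.2) u = v by apply: cell_ext'; cbn [cadd fst snd]; lia.
  done.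
- move=> [h1 h2]. split; first exact: IH. by rewrite Lset_shft.
Qed.

Lemma C_ne n : exists y, C n y.
Proof.
elim: n => [|n IH] /=.
  exists x0. split=> //. exists (0,0). by rewrite shft0.
have [[y [hy hl]] _] := mincard_spec n IH. by exists y.
Qed.

Lemma C_le n m y : (m <= n)%nat -> C n y -> C m y.
Proof.
elim: n m => [|n IH] m hm hk.
  by have -> : m = 0%nat by lia.
have [->|hlt] : m = n.+1 \/ (m <= n)%nat by lia. done.
apply: IH => //. by case: hk.
Qed.

Lemma C0_of n y : C n y -> C0 y.
Proof. move=> h. have := C_le (leq0n n) h. done. Qed.

Lemma C_def n : exists y, C n y /\ def y.
Proof.
have [y hy] := C_ne n. have [_ [v hv]] := C0_of hy. exists (shft v y); split=> //. exact: C_shft.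
Qed.

Definition ys (n : nat) : config S := epsilon (inhabits x0) (fun y => C n y /\ def y).
Lemma ys_spec n : C n (ys n) /\ def (ys n).
Proof. rewrite /ys. apply: (epsilon_spec (inhabits x0) (fun y => C n y /\ def y)). exact: C_def. Qed.

Definition zz := alim ys.
Lemma zz_lim : alimit ys zz.
Proof. exact: alim_spec. Qed.

Lemma zz_X : X zz.
Proof. have := @lim_X ys zz zz_lim. apply=> k. have [h _] := ys_spec k. by case: (C0_of h). Qed.
Lemma zz_def : def zz.
Proof. have := @lim_def ys zz zz_lim. apply=> k. by have [_ ] := ys_spec k. Qed.

Lemma zz_C n : C n zz.
Proof.
elim: n => [|n IH] /=.
  split; first exact: zz_X. exists (0,0). rewrite shft0. exact: zz_def.
split=> //.
have [_ hmin] := mincard_spec n (ex_intro _ _ IH).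
have hsub : Lset n zz \subset mincard n (C n).
  apply/subsetP => t ht.
  have [k [hk ht']] := lim_Lset zz_lim ht n.+1.
  have [hc _] := ys_spec k. have [_ <-] := C_le hk hc. done.
apply/eqP. rewrite eqEcard hsub /=. exact: hmin.
Qed.

Lemma zz_min y : X y -> (exists v, def (shft v y)) -> (forall n, Lset n y \subset Lset n zz) ->
  forall n, C n y /\ Lset n y = Lset n zz.
Proof.
move=> hX hd hs. suff H : forall n, C n y.
  move=> n; split=> //. have [_ e1] := H n.+1. have [_ e2] := zz_C n.+1. by rewrite e1 e2.
elim=> [|n IH] /=; first by split.
split=> //. have [_ e2] := zz_C n.+1. rewrite -e2.
have [_ hmin] := mincard_spec n (ex_intro _ _ IH).
apply/eqP. rewrite eqEcard hs /= e2. exact: hmin.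
Qed.

Definition A y := X y /\ def y /\ forall n, Lset n y \subset Lset n zz.

Lemma A_zz : A zz.
Proof. split; first exact: zz_X. split; first exact: zz_def. by move=> n. Qed.

Lemma lim_A xs w : alimit xs w -> (forall k, A (xs k)) -> A w.
Proof.
move=> hl hA. split.
  have := lim_X hl. apply=> k. by case: (hA k).
split.
  have := lim_def hl. apply=> k. by case: (hA k) => _ [].
move=> n. apply/subsetP => t ht.
have [k [_ hk]] := lim_Lset hl ht 0%nat.
have [_ [_ hs]] := hA k. exact: (subsetP (hs n)).
Qed.

Lemma A_eq y : A y -> forall n, Lset n y = Lset n zz.
Proof.
move=> [hX [hd hs]] n.
have hd' : exists v, def (shft v y) by exists (0,0); rewrite shft0.
by have [_ ->] := zz_min hX hd' hs n.
Qed.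

Definition iso z' (n : nat) := forall y, A y -> agree (Z.of_nat n) y z' -> y = z'.

Definition en (k : nat) := epsilon (inhabits x0) (fun x => X x /\ g x = k).
Lemma en_spec x : X x -> en (g x) = x.
Proof.
move=> hx. have [h1 h2] : X (en (g x)) /\ g (en (g x)) = g x.
  rewrite /en. apply: (epsilon_spec (inhabits x0) (fun x' => X x' /\ g x' = g x)). by exists x.
exact: ginj.
Qed.

Lemma exists_iso : exists z', A z' /\ exists n, (Rd <= n)%nat /\ iso z' n.
Proof.
apply: NNPP => Hn.
have NI : forall z', A z' -> forall n, exists y, A y /\ agree (Z.of_nat n) y z' /\ y <> z'.
  move=> z' hz' n. apply: NNPP => H. apply: Hn. exists z'; split=> //.
  exists (maxn n Rd); split; first lia.
  move=> y hy ha. apply: NNPP => hne. apply: H. exists y; split=> //; split=> //.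
  apply: agree_mono ha. lia.
pose P k (p : config S * nat) := fun q : config S * nat =>
  A q.1 /\ agree (Z.of_nat p.2) q.1 p.1 /\ (p.2 < q.2)%nat /\ ~ agree (Z.of_nat q.2) q.1 (en k).
pose nxt k p := epsilon (inhabits p) (P k p).
have nxt_spec : forall k p, A p.1 -> P k p (nxt k p).
  move=> k [y n] /= hy. apply: (epsilon_spec (inhabits (y, n)) (P k (y, n))).
  have [y1 [hy1 [ha1 hne1]]] : exists y1, A y1 /\ agree (Z.of_nat n) y1 y /\ y1 <> en k.
    case: (classic (y = en k)) => he.
      have [y1 [h1 [h2 h3]]] := NI y hy n. exists y1; split=> //; split=> //. by rewrite -he.
    by exists y; split=> //; split=> //; exact: agree_refl.
  have [c hc] : exists c, y1 c <> en k c.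
    apply: NNPP => H. apply: hne1. apply: functional_extensionality => c.
    apply: NNPP => H'. apply: H. by exists c.
  exists (y1, maxn n.+1 (nm c)). rewrite /P /=. split=> //; split=> //; split; first lia.
  move=> H. apply: hc. apply: H; rewrite /nm; lia.
pose fix sq k := match k with O => (zz, 0%nat) | k'.+1 => nxt k' (sq k') end.
have sqA : forall k, A (sq k).1.
  elim=> [|k IH] /=; first exact: A_zz. by have [] := nxt_spec k _ IH.
have sqS : forall k, P k (sq k) (sq k.+1) by move=> k; exact: nxt_spec (sqA k).
have mono : forall i j, (i <= j)%nat -> ((sq i).2 <= (sq j).2)%nat.
  move=> i j hij. elim: j hij => [|j IH] hij.
    by have -> : i = 0%nat by lia.
  have [->|hlt] : i = j.+1 \/ (i <= j)%nat by lia. done.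
  have [_ [_ [h _]]] := sqS j. have := IH hlt. lia.
have chain : forall i j, (i <= j)%nat -> agree (Z.of_nat (sq i).2) (sq j).1 (sq i).1.
  move=> i j hij. elim: j hij => [|j IH] hij.
    have -> : i = 0%nat by lia. exact: agree_refl.
  have [->|hlt] : i = j.+1 \/ (i <= j)%nat by lia. exact: agree_refl.
  have [_ [h _]] := sqS j. apply: agree_trans (IH hlt).
  apply: agree_mono h. have := mono i j hlt. lia.
set w := alim (fun k => (sq k).1).
have hl : alimit (fun k => (sq k).1) w by exact: alim_spec.
have hw : A w := lim_A hl sqA.
set k := g w.
have ew : en k = w by apply: en_spec; case: hw.
have [j [hj ha]] := hl (sq k.+1).2 k.+1.
have [_ [_ [_ hne]]] := sqS k. apply: hne. rewrite ew.
apply: agree_trans (agree_sym (chain _ _ hj)) ha.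
Qed.

Theorem GM : exists z', X z' /\ def z' /\
  forall vs : nat -> cell, (forall k, def (shft (vs k) z')) ->
  exists u, forall k0, exists k, (k0 <= k)%nat /\ shft (cadd u (vs k)) z' = z'.
Proof.
have [z' [hA [n [hn hiso]]]] := exists_iso.
exists z'. split; first by case: hA. split; first by case: hA => _ [].
move=> vs hvs.
have hAs : forall k, A (shft (vs k) z').
  move=> k. have [hX [hd hs]] := hA. split; first exact: Xshft. split=> //.
  move=> m. by rewrite Lset_shft.
set w := alim (fun k => shft (vs k) z').
have hl : alimit (fun k => shft (vs k) z') w by exact: alim_spec.
have hw : A w := lim_A hl hAs.
have hwin : win n z' \in Lset n w.
  rewrite (A_eq hw) -(A_eq hA). apply/in_Lset. exists (0,0). by rewrite shft0.
move/in_Lset: hwin => [u hu].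
have hu' : agree (Z.of_nat n) (shft u w) z' by exact/agree_win.
have hdz : def z' by case: hA => _ [].
have hAv : forall v y, A y -> agree (Z.of_nat n) y z' -> A y.
  by [].
have hAu : A (shft u w).
  have [hX [hd hs]] := hw. split; first exact: Xshft. split.
    apply: def_loc hdz. apply: agree_mono (agree_sym hu'). lia.
  move=> m. by rewrite Lset_shft.
have eu : shft u w = z' by exact: hiso hAu hu'.
exists u => k0.
have [k [hk ha]] := hl (Z.to_nat (Z.of_nat n + Z.abs u.1 + Z.abs u.2)) k0.
exists k; split=> //.
have ha' : agree (Z.of_nat n) (shft u (shft (vs k) z')) (shft u w).
  apply: agree_shft. apply: agree_mono ha. lia.
rewrite eu in ha'.
rewrite shft_shft in ha'.
have hA' : A (shft (cadd u (vs k)) z').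
  have [hX [hd hs]] := hAs k. split; first by rewrite -shft_shft; exact: Xshft.
  split.
    apply: def_loc hdz. apply: agree_mono (agree_sym ha'). lia.
  move=> m. rewrite Lset_shft. case: hA => _ [_ hs']. exact: hs' m.
exact: hiso hA' ha'.
Qed.

End GM.

Local Open Scope Z_scope.
Ltac ceq6 := apply: xeq; cbn [cadd csub fst snd]; lia.

Section Aux.
Variable S : finType.
Implicit Types x y z p : config S.

Lemma list_bound (q : pattern S) (v : cell) : exists B, 0 <= B /\ forall c a, List.In (c, a) q ->
  Z.abs (c.1 + v.1) <= B /\ Z.abs (c.2 + v.2) <= B.
Proof.
elim: q => [|[c0 a0] q [B [hB0 hB]]]; first by exists 0.
exists (B + Z.abs (c0.1 + v.1) + Z.abs (c0.2 + v.2)); split; first lia.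
move=> c a /= [[-> _]|h]; first lia.
have := hB c a h. lia.
Qed.

Lemma listF_bound (F : list (pattern S)) : exists K, 0 <= K /\ forall q c a, List.In q F -> List.In (c, a) q ->
  Z.abs c.1 <= K /\ Z.abs c.2 <= K.
Proof.
elim: F => [|q F [K [hK0 hK]]]; first by exists 0.
have [B [hB0 hB]] := list_bound q (0,0).
exists (K + B); split; first lia.
move=> q' c a /= [<-|h] hc.
  have := hB c a hc. cbn [fst snd]. lia.
have := hK q' c a h hc. lia.
Qed.

Lemma occurs_shft q v x : occurs q (shft v x) -> occurs q x.
Proof.
move=> [u hu]. exists (cadd u v) => c a h. rewrite -(hu c a h) /shft. ceq6.
Qed.

Lemma sequiv_sym x y : subpat_equiv x y -> subpat_equiv y x.
Proof. by case. Qed.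
Lemma sequiv_trans x y z : subpat_equiv x y -> subpat_equiv y z -> subpat_equiv x z.
Proof. move=> [h1 h2] [h3 h4]; split=> q hq; [apply: h1; apply: h3 | apply: h4; apply: h2] => //. Qed.

Lemma equiv_of_phase x p u : (forall c, x c = p (csub c u)) -> subpat_equiv x p.
Proof.
move=> H; split=> q [v hv].
- exists (cadd v u) => c a h. rewrite H -(hv c a h). ceq6.
- exists (csub v u) => c a h. rewrite -(hv c a h) H. ceq6.
Qed.

Definition zr (a : Z) (n : nat) : list Z := map (fun i => a + Z.of_nat i) (List.seq 0 n).
Lemma in_zr (R x : Z) : Z.abs x <= R -> List.In x (zr (- R) (Z.to_nat (2 * R + 1))).
Proof.
move=> h. apply/in_map_iff. exists (Z.to_nat (x + R)). split; first lia.
apply/in_seq. lia.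
Qed.
Definition boxlist (R : Z) : list cell :=
  flat_map (fun i => map (fun j => (i, j)) (zr (- R) (Z.to_nat (2 * R + 1)))) (zr (- R) (Z.to_nat (2 * R + 1))).
Lemma in_boxlist R (d : cell) : Z.abs d.1 <= R -> Z.abs d.2 <= R -> List.In d (boxlist R).
Proof.
case: d => d1 d2 /= h1 h2. apply/in_flat_map. exists d1; split; first exact: in_zr.
apply/in_map_iff. exists d2; split=> //. exact: in_zr.
Qed.

Lemma notge p R y : ~ pgood p R y (0,0) -> ~ subpat_ge p y.
Proof.
move=> hn hge.
pose q : pattern S := map (fun d => (d, y d)) (boxlist R).
have [v hv] : occurs q p.
  apply: hge. exists (0,0) => c a /in_map_iff [d [[<- <-] _]]. ceq6.
apply: hn. exists (- v.1, - v.2) => d h1 h2.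
have := hv d (y d) (in_map _ _ _ (in_boxlist h1 h2)). move=> e.
have -> : cadd (0,0) d = d by apply: cell_ext'; cbn; lia.
rewrite -e. ceq6.
Qed.

Lemma notequiv p R y : ~ pgood p R y (0,0) -> ~ subpat_equiv y p.
Proof. move=> h [_ h2]. exact: notge h h2. Qed.

Lemma pgood_agree p R x y : agree R x y -> pgood p R y (0,0) -> pgood p R x (0,0).
Proof.
move=> ha [u hu]. exists u => d h1 h2. rewrite -hu //.
have -> : cadd (0,0) d = d by apply: cell_ext'; cbn; lia.
exact: ha.
Qed.

Lemma pgood_shft p R x c : pgood p R (shft c x) (0,0) -> pgood p R x c.
Proof.
move=> [u hu]. exists (u.1 + c.1, u.2 + c.2) => d h1 h2.
have := hu d h1 h2. rewrite /shft => e.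
have e1 : x (cadd c d) = x (cadd (cadd (0,0) d) c) by ceq6.
rewrite e1 e. ceq6.
Qed.

Lemma per_of_shft z v : shft v z = z -> period z v.
Proof. move=> h c. by have := congr1 (fun f => f c) h. Qed.

End Aux.

Local Open Scope Z_scope.
Ltac ceq7 := apply: xeq; cbn [cadd csub fst snd]; lia.

Section Main.
Variable S : finType.
Implicit Types x y z w : config S.
Variable X : config S -> Prop.
Variable F : list (pattern S).
Variable K : Z.
Hypothesis HX : forall x, X x <-> (forall q, List.In q F -> ~ occurs q x).
Hypothesis hK0 : 0 <= K.
Hypothesis HK : forall q c a, List.In q F -> List.In (c, a) q -> Z.abs c.1 <= K /\ Z.abs c.2 <= K.
Variable g : config S -> nat.
Hypothesis ginj : forall x y, X x -> X y -> g x = g y -> x = y.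
Hypothesis NC : forall x y, X x -> X y -> doubly_periodic x -> doubly_periodic y -> subpat_equiv x y.
Variables x0 y0 : config S.
Hypotheses (hx0 : X x0) (hy0 : X y0) (hxy : ~ subpat_equiv x0 y0).

Lemma Xshft x v : X x -> X (shft v x).
Proof. move=> /HX hx. apply/HX => q hq hocc. apply: (hx q hq). exact: occurs_shft hocc. Qed.

Lemma Xclosed w : (forall N : nat, exists y, X y /\ agree (Z.of_nat N) y w) -> X w.
Proof.
move=> H. apply/HX => q hq [v hv].
have [B [hB0 hB]] := list_bound q v.
have [y [hy ha]] := H (Z.to_nat B).
move/HX: hy => hy. apply: (hy q hq). exists v => c a h.
rewrite -(hv c a h). have [b1 b2] := hB c a h. apply: ha; cbn; lia.
Qed.

Lemma two_idx (P : nat -> Prop) : (forall k0, exists k, (k0 <= k)%nat /\ P k) ->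
  exists k k', (k < k')%nat /\ P k /\ P k'.
Proof.
move=> H. have [k [_ hk]] := H 0%nat. have [k' [hk' hk'']] := H k.+1.
by exists k, k'.
Qed.

Lemma per_dir z (e : cell) u :
  (forall k0, exists k, (k0 <= k)%nat /\ shft (cadd u (Z.of_nat k * e.1, Z.of_nat k * e.2)) z = z) ->
  exists a, 0 < a /\ period z (a * e.1, a * e.2).
Proof.
move=> H. have [k [k' [hkk [h1 h2]]]] := two_idx H.
have P1 := per_of_shft h1. have P2 := per_of_shft h2.
exists (Z.of_nat k' - Z.of_nat k); split; first lia.
apply: (period_ext (period_add (period_opp P1) P2)); cbn [cadd fst snd]; lia.
Qed.

Lemma exists_p : exists p r, X p /\ 0 < r /\ period p (r,0) /\ period p (0,r).
Proof.
have [z [hz [_ KL]]] := @GM S X Xshft Xclosed g ginj (fun _ => True) 0%nat (fun _ _ _ _ => I) x0 hx0 I.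
have [u1 hu1] := KL (fun k => (Z.of_nat k * 1, Z.of_nat k * 0)) (fun _ => I).
have [u2 hu2] := KL (fun k => (Z.of_nat k * 0, Z.of_nat k * 1)) (fun _ => I).
have [a [ha Pa]] := per_dir (e := (1,0)) hu1.
have [b [hb Pb]] := per_dir (e := (0,1)) hu2.
have hne : (a * 0) * (b * 0) - (a * 1) * (b * 1) <> 0 by nia.
have hdp : doubly_periodic z := dp_of_periods Pa Pb hne.
have [r [hr Hr]] := hdp.
exists z, r; split=> //; split=> //; split=> c; by case: (Hr c).
Qed.

Section WithP.
Variables (p : config S) (r : Z).
Hypotheses (hp : X p) (hr : 0 < r) (pr1 : period p (r,0)) (pr2 : period p (0,r)).
Let R := r.

Lemma p_dp : doubly_periodic p.
Proof. exists r; split; first done. move=> c; split; [exact: pr1 | exact: pr2]. Qed.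

Lemma phase_reg z (Reg : cell -> Prop) e1 e2 c0 :
  Z.abs e1 = 1 -> Z.abs e2 = 1 ->
  (forall c, Reg c -> Reg (cadd c (e1, 0))) -> (forall c, Reg c -> Reg (cadd c (0, e2))) ->
  (forall c, Reg c -> pgood p R z c) -> Reg c0 ->
  exists u, forall c, Reg c -> z c = p (csub c u).
Proof.
move=> he1 he2 h1 h2 hg hc0. have [u hu] := hg c0 hc0. exists u => c hc.
exact: (region_phase hr (Z.le_refl r) pr1 pr2 he1 he2 h1 h2 hg hc0 hu hc).
Qed.

Lemma ex_def : exists x, X x /\ ~ pgood p R x (0,0).
Proof.
apply: NNPP => H.
have G : forall x, X x -> forall c, pgood p R x c.
  move=> x hx c. apply: pgood_shft. apply: NNPP => hn. apply: H. exists (shft c x); split=> //. exact: Xshft.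
have ph : forall x, X x -> exists u, forall c, x c = p (csub c u).
  move=> x hx. have [u hu] := phase_reg (Reg := fun _ => True) (e1 := 1) (e2 := 1) (c0 := (0,0)) erefl erefl (fun _ _ => I) (fun _ _ => I) (fun c _ => G x hx c) I.
  exists u => c. exact: hu.
have [u hu] := ph x0 hx0. have [u' hu'] := ph y0 hy0.
apply: hxy. exact: (sequiv_trans (equiv_of_phase hu) (sequiv_sym (equiv_of_phase hu'))).
Qed.

Definition dfc y := ~ pgood p R y (0,0).

Lemma dfc_loc x y : agree (Z.of_nat (Z.to_nat R)) x y -> dfc x -> dfc y.
Proof.
move=> ha hx hy. apply: hx. apply: pgood_agree hy. rewrite /R in ha *. move: ha.
rewrite Z2Nat.id //. lia.
Qed.

Section WithZ.
Variable z : config S.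
Hypotheses (hz : X z) (hz0 : dfc z).
Hypothesis KL : forall vs : nat -> cell, (forall k, dfc (shft (vs k) z)) ->
  exists u, forall k0, exists k, (k0 <= k)%nat /\ shft (cadd u (vs k)) z = z.

Lemma dfc_of c : ~ pgood p R z c -> dfc (shft c z).
Proof. move=> h h'. apply: h. exact: pgood_shft. Qed.

Lemma finish y : X y -> doubly_periodic y -> agree R y z -> False.
Proof.
move=> hy hdy ha.
have hn : ~ pgood p R y (0,0).
  move=> hg. apply: hz0. apply: pgood_agree hg. exact: agree_sym.
exact: (notequiv hn (NC hy hp hdy p_dp)).
Qed.

Lemma bound_gen (nu : cell -> Z) :
  (forall u v, period z (cadd u v) -> Z.abs (nu v) <= Z.abs (nu u)) ->
  exists W0, forall c, ~ pgood p R z c -> Z.abs (nu c) <= W0.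
Proof.
move=> Hnu. apply: NNPP => H.
have Hc : forall k : nat, exists c, ~ pgood p R z c /\ Z.of_nat k < Z.abs (nu c).
  move=> k. apply: NNPP => Hk. apply: H. exists (Z.of_nat k) => c hc.
  apply: NNPP => hlt. apply: Hk. exists c; split=> //. lia.
pose vs k := epsilon (inhabits (0,0)) (fun c => ~ pgood p R z c /\ Z.of_nat k < Z.abs (nu c)).
have hvs : forall k, ~ pgood p R z (vs k) /\ Z.of_nat k < Z.abs (nu (vs k)).
  move=> k. rewrite /vs. apply: (epsilon_spec (inhabits (0,0)) (fun c => ~ pgood p R z c /\ Z.of_nat k < Z.abs (nu c))).
  exact: Hc.
have [u hu] := KL (fun k => dfc_of (hvs k).1).
have [k [hk e]] := hu (Z.to_nat (Z.abs (nu u))).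
have := Hnu u (vs k) (per_of_shft e). have := (hvs k).2. lia.
Qed.


Lemma caseC : (forall h, period z h -> h = (0,0)) -> False.
Proof.
move=> H0.
have Hnu : forall u v, period z (cadd u v) ->
    Z.abs (Z.max (Z.abs v.1) (Z.abs v.2)) <= Z.abs (Z.max (Z.abs u.1) (Z.abs u.2)).
  move=> u v hp'. have e := H0 _ hp'. have e1 := congr1 fst e. have e2 := congr1 snd e.
  move: e1 e2; cbn [cadd fst snd]; lia.
have [B0 hB0] := bound_gen Hnu.
set B := Z.max B0 0 + R + 1.
have hR0 : 0 < R by rewrite /R.
have Out : forall c, B <= Z.abs c.1 \/ B <= Z.abs c.2 -> pgood p R z c.
  move=> c hc. apply: NNPP => hn. have := hB0 c hn. rewrite /B in hc. lia.
have [u1 hu1] := @phase_reg z (fun c => B <= c.1) 1 1 (B,0) erefl erefl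
  ltac:(move=> c hc; cbn; lia) ltac:(move=> c hc; cbn; lia) ltac:(move=> c hc; apply: Out; lia) ltac:(cbn; lia).
have [u2 hu2] := @phase_reg z (fun c => B <= c.2) 1 1 (0,B) erefl erefl
  ltac:(move=> c hc; cbn; lia) ltac:(move=> c hc; cbn; lia) ltac:(move=> c hc; apply: Out; lia) ltac:(cbn; lia).
have [u3 hu3] := @phase_reg z (fun c => c.1 <= - B) (-1) 1 (-B,0) erefl erefl
  ltac:(move=> c hc; cbn; lia) ltac:(move=> c hc; cbn; lia) ltac:(move=> c hc; apply: Out; lia) ltac:(cbn; lia).
have [u4 hu4] := @phase_reg z (fun c => c.2 <= - B) 1 (-1) (0,-B) erefl erefl
  ltac:(move=> c hc; cbn; lia) ltac:(move=> c hc; cbn; lia) ltac:(move=> c hc; apply: Out; lia) ltac:(cbn; lia).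
have E12 : Eq p u1 u2.
  apply: (agree_sq hr pr1 pr2 (a := (B,B))) => x; cbn [fst snd] => hx1 hx2.
  have a1 := hu1 x ltac:(lia). have a2 := hu2 x ltac:(lia). by rewrite -a1 -a2.
have E32 : Eq p u3 u2.
  apply: (agree_sq hr pr1 pr2 (a := (-B - r + 1,B))) => x; cbn [fst snd] => hx1 hx2.
  have a1 := hu3 x ltac:(lia). have a2 := hu2 x ltac:(lia). by rewrite -a1 -a2.
have E14 : Eq p u1 u4.
  apply: (agree_sq hr pr1 pr2 (a := (B,-B - r + 1))) => x; cbn [fst snd] => hx1 hx2.
  have a1 := hu1 x ltac:(lia). have a2 := hu4 x ltac:(lia). by rewrite -a1 -a2.
have Pz : forall c, B <= Z.abs c.1 \/ B <= Z.abs c.2 -> z c = p (csub c u1).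
  move=> c hc.
  have [h|[h|[h|h]]] : B <= c.1 \/ c.1 <= - B \/ B <= c.2 \/ c.2 <= - B by lia.
  - exact: hu1.
  - by rewrite (hu3 c h) E32 E12.
  - by rewrite (hu2 c h) E12.
  - by rewrite (hu4 c h) E14.
set M := 2 * B + 2 * K + 1.
have hM : 0 < M by rewrite /M; lia.
have hMK : 2 * B + 2 * K < M by rewrite /M; lia.
have hT : 0 < r * M by nia.
have hMT : M <= r * M by nia.
set y1 := glue z 0 1 (0, r * M) (r * M) (- B).
have hz1 : forall d, - B - 2 * ((Z.abs 0 + Z.abs 1) * K) <= lf 0 1 d < - B -> z (cadd d (0, r * M)) = z d.
  move=> d; rewrite /lf; cbn [fst snd] => hd.
  rewrite (Pz (cadd d (0, r * M))); last by cbn; lia.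
  rewrite (Pz d); last by lia.
  rewrite -(p_per pr1 pr2 0 M (csub d u1)). ceq7.
have Xy1 : X y1.
  apply: (glue_X HX HK hT hK0 _ _ hz1 hz); cbn [fst snd]; lia.
have Py1 : period y1 (0, r * M) by apply: glue_per => //; cbn [fst snd]; lia.
have y1out : forall c, B <= Z.abs c.1 -> y1 c = p (csub c u1).
  move=> c hc. rewrite /y1 /glue. move: (kk _ _ _ _ c) => k.
  rewrite Pz; last by cbn [fst snd]; lia.
  rewrite -(p_per pr1 pr2 0 (- (k * M)) (csub c u1)). ceq7.
set y2 := glue y1 1 0 (r * M, 0) (r * M) (- B).
have hz2 : forall d, - B - 2 * ((Z.abs 1 + Z.abs 0) * K) <= lf 1 0 d < - B -> y1 (cadd d (r * M, 0)) = y1 d.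
  move=> d; rewrite /lf; cbn [fst snd] => hd.
  rewrite (y1out (cadd d (r * M, 0))); last by cbn; lia.
  rewrite (y1out d); last by lia.
  rewrite -(p_per pr1 pr2 M 0 (csub d u1)). ceq7.
have Xy2 : X y2.
  apply: (glue_X HX HK hT hK0 _ _ hz2 Xy1); cbn [fst snd]; lia.
have P1 : period y2 (r * M, 0) by apply: glue_per => //; cbn [fst snd]; lia.
have P2 : period y2 (0, r * M).
  apply: (glue_per2 K); [rewrite /lf; cbn [fst snd]; lia | exact: Py1].
have dpy2 : doubly_periodic y2.
  exists (r * M); split; first exact: hT. move=> c; split; [exact: P1 | exact: P2].
apply: (finish Xy2 dpy2) => d h1 h2.
rewrite /y2 (glue_eq K); last by rewrite /lf; cbn [fst snd]; lia.
rewrite /y1 (glue_eq K); last by rewrite /lf; cbn [fst snd]; lia.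
done.
Qed.


Lemma caseB h : period z h -> h <> (0,0) ->
  (forall h', period z h' -> lf h.2 (- h.1) h' = 0) -> False.
Proof.
move=> Ph hne Hker.
pose a := h.2. pose b := - h.1.
have hab : 1 <= a * a + b * b.
  apply: NNPP => hn.
  have ha0 := Z.square_nonneg a. have hb0 := Z.square_nonneg b.
  have ea : a * a = 0 by lia. have eb : b * b = 0 by lia.
  move/Z.mul_eq_0: ea => ea. move/Z.mul_eq_0: eb => eb.
  apply: hne. apply: cell_ext'; rewrite /a /b in ea eb; cbn [fst snd]; lia.
have Hnu : forall u v, period z (cadd u v) -> Z.abs (lf a b v) <= Z.abs (lf a b u).
  move=> u v hp'. have e := Hker _ hp'. move: e. rewrite /lf /a /b; cbn [cadd fst snd]. lia.
have [W0 hW0] := bound_gen Hnu.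
have hR0 : 0 < R by rewrite /R.
pose DR := (Z.abs a + Z.abs b) * R.
have DR0 : 0 <= DR by rewrite /DR; apply: Z.mul_nonneg_nonneg; lia.
pose W := Z.max W0 0 + DR + 1.
have hW : 0 < W by rewrite /W; lia.
have Outg : forall c, W <= Z.abs (lf a b c) -> pgood p R z c.
  move=> c hc. apply: NNPP => hn. have := hW0 c hn. rewrite /W in hc. lia.
have [e1 [he1 ha1]] : exists e, Z.abs e = 1 /\ 0 <= a * e.
  case: (Z_le_gt_dec 0 a) => ha; [exists 1 | exists (-1)]; split; lia.
have [e2 [he2 hb2]] : exists e, Z.abs e = 1 /\ 0 <= b * e.
  case: (Z_le_gt_dec 0 b) => hb; [exists 1 | exists (-1)]; split; lia.
have lf_add : forall c d, lf a b (cadd c d) = lf a b c + lf a b d.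
  move=> c d; rewrite /lf; cbn [cadd fst snd]; ring.
have lf_e1 : lf a b (e1, 0) = a * e1 by rewrite /lf; cbn [fst snd]; ring.
have lf_e2 : lf a b (0, e2) = b * e2 by rewrite /lf; cbn [fst snd]; ring.
have lf_e1' : lf a b (- e1, 0) = - (a * e1) by rewrite /lf; cbn [fst snd]; ring.
have lf_e2' : lf a b (0, - e2) = - (b * e2) by rewrite /lf; cbn [fst snd]; ring.
have lfc0 : lf a b (W * a, W * b) = W * (a * a + b * b) by rewrite /lf; cbn [fst snd]; ring.
have lfc1 : lf a b (- (W * a), - (W * b)) = - (W * (a * a + b * b)) by rewrite /lf; cbn [fst snd]; ring.
have hWab : W <= W * (a * a + b * b).
  have := Z.mul_le_mono_nonneg_l 1 (a * a + b * b) W ltac:(lia) hab. lia.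
have [uA huA] := @phase_reg z (fun c => W <= lf a b c) e1 e2 (W * a, W * b) he1 he2
  ltac:(move=> c hc; cbv beta; rewrite lf_add lf_e1; lia) ltac:(move=> c hc; cbv beta; rewrite lf_add lf_e2; lia)
  ltac:(move=> c hc; apply: Outg; cbv beta in hc; lia) ltac:(cbv beta; rewrite lfc0; lia).
have [uB huB] := @phase_reg z (fun c => lf a b c <= - W) (- e1) (- e2) (- (W * a), - (W * b))
  ltac:(lia) ltac:(lia)
  ltac:(move=> c hc; cbv beta; rewrite lf_add lf_e1'; lia) ltac:(move=> c hc; cbv beta; rewrite lf_add lf_e2'; lia)
  ltac:(move=> c hc; apply: Outg; cbv beta in hc; lia) ltac:(cbv beta; rewrite lfc1; lia).
pose D := (Z.abs a + Z.abs b) * K.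
have D0 : 0 <= D by rewrite /D; apply: Z.mul_nonneg_nonneg; lia.
pose f0 := lf a b (csub uA uB).
pose lam := 2 * W + 2 * D + DR + 1 + Z.abs f0.
pose t : cell := (uA.1 - uB.1 + r * lam * a, uA.2 - uB.2 + r * lam * b).
pose T := a * t.1 + b * t.2.
have hTe : T = f0 + lam * (r * (a * a + b * b)).
  rewrite /T /t /f0 /lf /csub; cbn [fst snd]; ring.
have hr1 : 1 <= r * (a * a + b * b).
  have := Z.mul_le_mono_nonneg 1 r 1 (a * a + b * b) ltac:(lia) ltac:(lia) ltac:(lia) hab. lia.
have hlam : 0 <= lam by rewrite /lam; lia.
have hbig : lam <= lam * (r * (a * a + b * b)).
  have := Z.mul_le_mono_nonneg_l 1 (r * (a * a + b * b)) lam hlam hr1. lia.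
have hTge : 2 * W + 2 * D + DR + 1 <= T by rewrite hTe /lam in hbig *; lia.
have hT : 0 < T by lia.
have lfT : forall d, lf a b (cadd d t) = lf a b d + T.
  move=> d. rewrite lf_add. by [].
pose y := glue z a b t T (- W).
have hzz : forall d, - W - 2 * ((Z.abs a + Z.abs b) * K) <= lf a b d < - W -> z (cadd d t) = z d.
  move=> d hd. rewrite -/D in hd.
  rewrite (huA (cadd d t)); last by rewrite lfT; lia.
  rewrite (huB d); last by lia.
  rewrite -(p_per pr1 pr2 (lam * a) (lam * b) (csub d uB)). rewrite /t. ceq7.
have Xy : X y.
  apply: (glue_X HX HK hT hK0 _ _ hzz hz) => //. rewrite -/D. lia.
have Pt : period y t by apply: (glue_per K) => //.
have Phy : period y h.
  apply: (glue_per2 K); last exact: Ph. rewrite /lf /a /b; ring.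
have dpy : doubly_periodic y.
  apply: (dp_of_periods Phy Pt). rewrite /T /a /b in hT. lia.
apply: (finish Xy dpy) => d h1 h2.
have := absb (a := a) (b := b) h1 h2. rewrite -/DR => hd.
rewrite /y (glue_eq K) //. rewrite /lf in hd *. lia.
Qed.

End WithZ.

Lemma main_contra : False.
Proof.
have [x1 [hx1 hd1]] := ex_def.
have [z [hz [hz0 KL]]] := @GM S X Xshft Xclosed g ginj dfc (Z.to_nat R) dfc_loc x1 hx1 hd1.
case: (classic (forall h, period z h -> h = (0,0))) => H0.
  exact: (caseC hz hz0 KL H0).
have [h [Ph hne]] : exists h, period z h /\ h <> (0,0).
  apply: NNPP => H1. apply: H0 => h' hh. apply: NNPP => hn. apply: H1. by exists h'.
case: (classic (forall h', period z h' -> lf h.2 (- h.1) h' = 0)) => Hk.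
  exact: (caseB hz hz0 KL Ph hne Hk).
have [h' [Ph' hf]] : exists h', period z h' /\ lf h.2 (- h.1) h' <> 0.
  apply: NNPP => H1. apply: Hk => h'' hh. apply: NNPP => hn. apply: H1. by exists h''.
have dpz : doubly_periodic z.
  apply: (dp_of_periods Ph Ph'). move: hf; rewrite /lf. lia.
exact: (finish hz0 hz dpz (fun d _ _ => erefl)).
Qed.

End WithP.
End Main.

Theorem mainTheorem11 (S : finType) (X : config S -> Prop) :
  is_SFT X ->
  countable_set X ->
  (exists x y, X x /\ X y /\ ~ subpat_equiv x y) ->
  exists x y, X x /\ X y /\ doubly_periodic x /\ doubly_periodic y /\
              ~ subpat_equiv x y.
Proof.
move=> [F HF] [g hg] [x0 [y0 [hx0 [hy0 hxy]]]].
apply: NNPP => Hn.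
have NC : forall x y, X x -> X y -> doubly_periodic x -> doubly_periodic y -> subpat_equiv x y.
  move=> x y hx hy dx dy. apply: NNPP => hne. apply: Hn. exists x, y. by do !split.
have [K [hK0 HK]] := listF_bound F.
have [p [r [hp [hr [pr1 pr2]]]]] := exists_p HF hg hx0.
exact: (main_contra HF hK0 HK hg NC hx0 hy0 hxy hp hr pr1 pr2).
Qed.
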